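(* Let $n\geq 2$ and consider the clustered graph of overlapping $n$-permutations. For every cluster $Y$ there exists a unique cluster $X$ such that there are exactly two (parallel) edges from $X$ to $Y$.
   Context: An $n$-permutation is a permutation $\pi_1\cdots\pi_n$ of $\{1,\ldots,n\}$. For a word $w$ of distinct numbers, $\mathrm{red}(w)$ is the permutation obtained by replacing the $i$-th smallest letter by $i$. For an $(n-1)$-permutation $\tau$, the cluster with signature $\tau$ is the set of all $n$-permutations $\pi$ with $\mathrm{red}(\pi_1\cdots\pi_{n-1})=\tau$. The clustered graph of overlapping $n$-permutations is the directed multigraph (loops allowed) whose vertices are the $(n-1)!$ clusters and in which every $n$-permutation $\pi$ contributes exactly one edge, going from the cluster containing $\pi$ to the cluster with signature $\mathrm{red}(\pi_2\cdots\pi_n)$. *)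

(* Defs.v *)
From mathcomp Require Import all_boot all_fingroup.
Set Implicit Arguments. Unset Strict Implicit. Unset Printing Implicit Defensive.

(* Permutations of {0,...,k-1} (0-based instead of 1-based; harmless). *)
Definition word (k : nat) (s : 'S_k) : seq nat := [seq val (s i) | i <- enum 'I_k].

(* red w: replace the i-th smallest letter by i (0-based), for a word of
   distinct numbers: each letter is replaced by the number of letters smaller than it. *)
Definition red (w : seq nat) : seq nat := [seq count (fun y => y < x) w | x <- w].

(* Signature of the cluster containing pi: red(pi_1 ... pi_{n-1}). *)
Definition src (n : nat) (pi : 'S_n) : seq nat := red (take n.-1 (word pi)).
(* Signature of the cluster the edge of pi points to: red(pi_2 ... pi_n). *)
Definition tgt (n : nat) (pi : 'S_n) : seq nat := red (behead (word pi)).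

(* Number of edges from cluster X to cluster Y (clusters indexed by their
   signatures, (n-1)-permutations) in the clustered graph of overlapping n-permutations. *)
Definition nedges (n : nat) (X Y : 'S_n.-1) : nat :=
  #|[set pi : 'S_n | (src pi == word X) && (tgt pi == word Y)]|.

(* Main.v *)
Require Import Defs.
From mathcomp Require Import all_boot all_fingroup.
From mathcomp Require Import zify.

Lemma count_lt_mono (a b : nat) (w : seq nat) : a <= b ->
  count (fun y => y < a) w <= count (fun y => y < b) w.
Proof. move=> ab; apply: sub_count => y /= ya; exact: leq_trans ya ab. Qed.

Lemma count_lt_strict (a b : nat) (w : seq nat) : a < b -> a \in w ->
  count (fun y => y < a) w < count (fun y => y < b) w.
Proof.
move=> ab; elim: w => [|x w IH] //=; rewrite in_cons => /orP [/eqP <-|aw].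
  by rewrite ltnn ab add0n add1n ltnS count_lt_mono // ltnW.
rewrite -addnS; apply: leq_add; last exact: IH.
by case: (ltnP x a) => h; case: (ltnP x b) => h' //; lia.
Qed.

Lemma red_cmp (w : seq nat) i j : i < size w -> j < size w ->
  (nth 0 (red w) i < nth 0 (red w) j) = (nth 0 w i < nth 0 w j).
Proof.
move=> hi hj; rewrite /red !(nth_map 0) //.
case: (ltnP (nth 0 w i) (nth 0 w j)) => h.
  by apply: count_lt_strict => //; apply: mem_nth.
by rewrite ltnNge count_lt_mono.
Qed.

Definition ceq (a b : seq nat) := size a = size b /\ forall i j, i < size a -> j < size a ->
  (nth 0 a i < nth 0 a j) = (nth 0 b i < nth 0 b j).

Lemma count_idx (p : pred nat) (a : seq nat) :
  count p a = count (fun j => p (nth 0 a j)) (iota 0 (size a)).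
Proof. by rewrite -{1}(mkseq_nth 0 a) /mkseq count_map. Qed.

Lemma ceq_red (a b : seq nat) : ceq a b -> red a = red b.
Proof.
move=> [hs hc]; apply: (@eq_from_nth _ 0); first by rewrite !size_map.
rewrite size_map => i hi; rewrite /red !(nth_map 0) -?hs //.
rewrite (count_idx _ a) (count_idx _ b) -hs; apply: eq_in_count => j; rewrite mem_iota add0n /= => hj.
exact: hc.
Qed.

Lemma red_eqP (a b : seq nat) : red a = red b <-> ceq a b.
Proof.
split; last exact: ceq_red.
move=> e; have sa : size (red a) = size a by rewrite size_map.
have sb : size (red b) = size b by rewrite size_map.
split; first by rewrite -sa -sb e.
move=> i j hi hj; have hb : size a = size b by rewrite -sa -sb e.
by rewrite -(@red_cmp a i j hi hj) -(@red_cmp b i j) -?hb // e.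
Qed.

Lemma count_iota_lt k x : x <= k -> count (fun y => y < x) (iota 0 k) = x.
Proof.
move=> hx; rewrite -(subnKC hx) iotaD count_cat add0n.
rewrite (eq_in_count (a2 := predT)) ?count_predT ?size_iota; last first.
  by move=> y; rewrite mem_iota add0n /= => ->.
rewrite (eq_in_count (a2 := pred0)) ?count_pred0 ?addn0 //.
by move=> y; rewrite mem_iota /= => /andP [h _]; rewrite ltnNge h.
Qed.

Lemma size_word k (s : 'S_k) : size (word s) = k.
Proof. by rewrite size_map size_enum_ord. Qed.

Lemma nth_word k (s : 'S_k) (i : 'I_k) : nth 0 (word s) i = s i.
Proof. by rewrite /word (nth_map i) ?size_enum_ord // nth_ord_enum. Qed.

Lemma uniq_word k (s : 'S_k) : uniq (word s).
Proof.
rewrite /word (map_inj_uniq (f := fun i => val (s i))) ?enum_uniq //.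
by move=> i j /val_inj /perm_inj.
Qed.

Lemma mem_word k (s : 'S_k) x : (x \in word s) = (x < k).
Proof.
rewrite /word; apply/idP/idP => [/mapP [i _ ->] //|hx]; first exact: ltn_ord.
have -> : x = val (s (s^-1 (Ordinal hx))%g) by rewrite permKV.
by apply: (map_f (fun i => val (s i))); rewrite mem_enum.
Qed.

Lemma perm_word k (s : 'S_k) : perm_eq (word s) (iota 0 k).
Proof.
apply: uniq_perm; first exact: uniq_word; first exact: iota_uniq.
by move=> x; rewrite mem_word mem_iota add0n.
Qed.

Lemma red_word k (s : 'S_k) : red (word s) = word s.
Proof.
apply: (@eq_from_nth _ 0); first by rewrite size_map.
rewrite size_map => i hi; rewrite /red (nth_map 0) //.
rewrite (seq.permP (@perm_word _ s)) count_iota_lt //.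
rewrite size_word in hi; rewrite -[i]/(val (Ordinal hi)) nth_word; exact: ltnW.
Qed.

Lemma word_inj k (s t : 'S_k) : word s = word t -> s = t.
Proof. by move=> e; apply/permP => i; apply: val_inj; change (nat_of_ord (s i) = nat_of_ord (t i)); by rewrite -!nth_word e. Qed.

Lemma red_perm k (w : seq nat) : uniq w -> size w = k -> exists X : 'S_k, word X = red w.
Proof.
case: k => [|k] uw sw.
  exists 1%g; apply: (@eq_from_nth _ 0); rewrite ?size_word ?size_map ?sw //.
have hlt i : i < size w -> count (fun y => y < nth 0 w i) w < k.+1.
  move=> hi; have := count_predC (fun y => y < nth 0 w i) w.
  have : 0 < count (predC (fun y => y < nth 0 w i)) w.
    rewrite -has_count; apply/hasP; exists (nth 0 w i); first exact: mem_nth.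
    by rewrite /= ltnn.
  rewrite sw; lia.
pose f (i : 'I_k.+1) : 'I_k.+1 := inord (count (fun y => y < nth 0 w i) w).
have fE (i : 'I_k.+1) : val (f i) = count (fun y => y < nth 0 w i) w.
  by rewrite /f /= inordK // hlt // sw.
have finj : injective f.
  move=> i j /(congr1 val); rewrite !fE => e; apply: val_inj => /=.
  have hi : i < size w by rewrite sw.
  have hj : j < size w by rewrite sw.
  apply/eqP; rewrite -(nth_uniq 0 hi hj uw).
  case: (ltngtP (nth 0 w i) (nth 0 w j)) => // h.
    by move: h; rewrite -(@red_cmp w i j) // /red !(nth_map 0) // e ltnn.
  by move: h; rewrite -(@red_cmp w j i) // /red !(nth_map 0) // e ltnn.
exists (perm finj); apply: (@eq_from_nth _ 0); rewrite ?size_word ?size_map ?sw //.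
move=> i hi; rewrite -[i]/(val (Ordinal hi)) nth_word permE fE /red (nth_map 0) // sw.
done.
Qed.

Notation P s i := (nth 0 (word s) i).

Lemma P_lt k (s : 'S_k) i : i < k -> P s i < k.
Proof. by move=> hi; rewrite -[i]/(val (Ordinal hi)) nth_word. Qed.

Lemma P_inj k (s : 'S_k) i j : i < k -> j < k -> P s i = P s j -> i = j.
Proof.
move=> hi hj e; apply/eqP; rewrite -(nth_uniq 0 _ _ (@uniq_word _ s)) ?size_word //.
by apply/eqP.
Qed.

Lemma P_surj k (s : 'S_k) v : v < k -> exists i, i < k /\ P s i = v.
Proof.
move=> hv; exists (s^-1 (Ordinal hv))%g; split; first exact: ltn_ord.
by rewrite nth_word permKV.
Qed.

Lemma P_mul k (s t : 'S_k) i (hi : i < k) : P (s * t)%g i = t (s (Ordinal hi)).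
Proof. by rewrite -[i]/(val (Ordinal hi)) nth_word permM. Qed.

Lemma cmp_perm_eq k (s t : 'S_k) :
  (forall i j, i < k -> j < k -> (P s i < P s j) = (P t i < P t j)) -> s = t.
Proof.
move=> h; apply: word_inj; rewrite -(@red_word _ s) -(@red_word _ t); apply: ceq_red.
by split; rewrite ?size_word // => i j; rewrite size_word; apply: h.
Qed.

Lemma srcE n (s t : 'S_n.+2) : src s = src t <->
  forall i j, i < n.+1 -> j < n.+1 -> (P s i < P s j) = (P t i < P t j).
Proof.
rewrite /src red_eqP /ceq !size_takel ?size_word //; split.
  by move=> [_ h] i j hi hj; move: (h i j hi hj); rewrite !nth_take.
by move=> h; split=> // i j hi hj; rewrite !nth_take //; apply: h.
Qed.

Lemma srcX n (s : 'S_n.+2) (X : 'S_n.+1) : src s = word X <->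
  forall i j, i < n.+1 -> j < n.+1 -> (P s i < P s j) = (P X i < P X j).
Proof.
rewrite /src -{1}(@red_word _ X) red_eqP /ceq !size_takel ?size_word //; split.
  by move=> [_ h] i j hi hj; move: (h i j hi hj); rewrite !nth_take.
by move=> h; split=> // i j hi hj; rewrite !nth_take //; apply: h.
Qed.

Lemma tgtX n (s : 'S_n.+2) (X : 'S_n.+1) : tgt s = word X <->
  forall i j, i < n.+1 -> j < n.+1 -> (P s i.+1 < P s j.+1) = (P X i < P X j).
Proof.
rewrite /tgt -{1}(@red_word _ X) red_eqP /ceq size_behead !size_word; split.
  by move=> [_ h] i j hi hj; move: (h i j hi hj); rewrite !nth_behead.
by move=> h; split=> // i j hi hj; rewrite !nth_behead //; apply: h.
Qed.

Lemma adj_nat a v : v != a -> v != a.+1 -> (a < v) = (a.+1 < v) /\ (v < a) = (v < a.+1).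
Proof. move=> /eqP h1 /eqP h2; split; apply/idP/idP; lia. Qed.

Lemma adj_perm n (s : 'S_n.+2) j : 0 < j -> j < n.+1 -> P s n.+1 = (P s 0).+1 ->
  (P s 0 < P s j) = (P s n.+1 < P s j) /\ (P s j < P s 0) = (P s j < P s n.+1).
Proof.
move=> j0 jm e; rewrite e; apply: adj_nat; apply/eqP => h.
  by have := @P_inj _ s j 0 (ltnW jm) (isT : 0 < n.+2) h; lia.
by rewrite -e in h; have := @P_inj _ s j n.+1 (ltnW jm) (ltnSn n.+1) h; lia.
Qed.

Lemma flip n (s : 'S_n.+2) : (P s n.+1 < P s 0) = ~~ (P s 0 < P s n.+1).
Proof.
have h : P s 0 != P s n.+1.
  by apply/eqP => /(@P_inj _ s 0 n.+1 isT (ltnSn _)).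
by rewrite ltnNge leq_eqVlt (negbTE h).
Qed.

Lemma det n (X Y : 'S_n.+1) (s t : 'S_n.+2) : src s = word X -> src t = word X ->
  tgt s = word Y -> tgt t = word Y ->
  (P s 0 < P s n.+1) = (P t 0 < P t n.+1) -> s = t.
Proof.
move=> /srcX sX /srcX tX /tgtX sY /tgtX tY e; apply: cmp_perm_eq => i j hi hj.
case: i hi => [|i] hi; case: j hj => [|j] hj.
- by rewrite !ltnn.
- case: (ltnP j.+1 n.+1) => hj'; first by rewrite sX // tX.
  by have -> : j = n by lia.
- case: (ltnP i.+1 n.+1) => hi'; first by rewrite sX // tX.
  have -> : i = n by lia.
  by rewrite !flip e.
- by rewrite sY // tY.
Qed.

Lemma uniq_part n (X X0 Y : 'S_n.+1) (s0 s t : 'S_n.+2) :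
  src s = word X -> src t = word X -> tgt s = word Y -> tgt t = word Y ->
  src s0 = word X0 -> tgt s0 = word Y -> P s0 n.+1 = (P s0 0).+1 ->
  P s 0 < P s n.+1 -> ~~ (P t 0 < P t n.+1) -> X0 = X.
Proof.
move=> /srcX sX /srcX tX /tgtX sY /tgtX tY /srcX s0X /tgtX s0Y e0 hs ht.
have sm : P s n.+1 = (P s 0).+1.
  case: (eqVneq (P s n.+1) (P s 0).+1) => // hne; exfalso.
  have hv : (P s 0).+1 < n.+2.
    have := @P_lt _ s n.+1 (ltnSn _); lia.
  have [k [hk ek]] := @P_surj _ s _ hv.
  case: k hk ek => [|k] hk ek; first lia.
  have hk' : k < n.
    case: (ltnP k n) => // hkn; have ekn : k = n by lia.
    by move: hne; rewrite -ek ekn eqxx.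
  have h1 : P t 0 < P t k.+1.
    by rewrite tX // -sX // ek.
  have h2 : P t k.+1 < P t n.+1.
    rewrite (tY k n) // -(sY k n) // ek; lia.
  by move: ht; rewrite (ltn_trans h1 h2).
apply: cmp_perm_eq => i j hi hj; rewrite -s0X // -sX //.
case: i hi => [|i] hi; case: j hj => [|j] hj.
- by rewrite !ltnn.
- have [A1 _] := @adj_perm _ s0 j.+1 isT hj e0.
  have [A2 _] := @adj_perm _ s j.+1 isT hj sm.
  by rewrite A1 A2 (s0Y n j) ?(sY n j) //; lia.
- have [_ A1] := @adj_perm _ s0 i.+1 isT hi e0.
  have [_ A2] := @adj_perm _ s i.+1 isT hi sm.
  by rewrite A1 A2 (s0Y i n) ?(sY i n) //; lia.
- by rewrite (s0Y i j) ?(sY i j) //; lia.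
Qed.

Lemma bump_lt c x y : (bump c x < bump c y) = (x < y).
Proof. rewrite /bump; case: (leqP c x); case: (leqP c y) => /= h1 h2; lia. Qed.

Theorem lemma3 (n : nat) (hn : 2 <= n) (Y : 'S_n.-1) :
  exists! X : 'S_n.-1, nedges X Y = 2.
Proof.
case: n hn Y => [|[|n]] // _ Y.
pose c := nat_of_ord (Y ord_max).
have hc : c < n.+1 by exact: ltn_ord.
have hYc : P Y n = c by rewrite -[n]/(val (@ord_max n)) nth_word.
pose a : 'I_n.+2 := inord c.
pose b : 'I_n.+2 := inord c.+1.
have ha : val a = c by rewrite /a /= inordK //; lia.
have hb : val b = c.+1 by rewrite /b /= inordK //; lia.
pose s0 := lift_perm ord0 a Y.
have s0_0 : P s0 0 = c.
  by rewrite -[0]/(val (@ord0 n.+1)) nth_word lift_perm_id.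
have s0_S i : i < n.+1 -> P s0 i.+1 = bump c (P Y i).
  move=> hi; rewrite -(lift0 (Ordinal hi)) nth_word lift_perm_lift /=.
  by rewrite -[i]/(val (Ordinal hi)) nth_word ha.
have s0_m : P s0 n.+1 = c.+1.
  by rewrite s0_S // hYc /bump leqnn.
have s0_mid j : 0 < j -> j < n.+1 -> P s0 j != c /\ P s0 j != c.+1.
  move=> j0 jn; split; apply/eqP => h.
    by have := @P_inj _ s0 j 0 (ltnW jn) isT; rewrite h s0_0 => /(_ erefl); lia.
  by have := @P_inj _ s0 j n.+1 (ltnW jn) (ltnSn _); rewrite h s0_m => /(_ erefl); lia.
pose s1 := (s0 * tperm a b)%g.
have s1_0 : P s1 0 = c.+1.
  rewrite (@P_mul _ s0 _ 0 isT).
  have -> : Ordinal (isT : 0 < n.+2) = ord0 by apply: val_inj.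
  by rewrite lift_perm_id tpermL.
have s1_m : P s1 n.+1 = c.
  rewrite (@P_mul _ s0 _ n.+1 (ltnSn _)).
  have -> : s0 (Ordinal (ltnSn n.+1)) = b.
    by apply: val_inj; rewrite hb -s0_m -[n.+1]/(val (Ordinal (ltnSn n.+1))) nth_word.
  by rewrite tpermR.
have s1_mid j : 0 < j -> j < n.+1 -> P s1 j = P s0 j.
  move=> j0 jn; have [h1 h2] := s0_mid j j0 jn.
  have hj2 : j < n.+2 by lia.
  have e : val (s0 (Ordinal hj2)) = P s0 j.
    by rewrite -[j in RHS]/(val (Ordinal hj2)) nth_word.
  rewrite (@P_mul _ s0 _ j hj2) tpermD //; apply/eqP => /(congr1 val).
    by rewrite e ha => h; move: h1; rewrite h eqxx.
  by rewrite e hb => h; move: h2; rewrite h eqxx.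
have tg0 : tgt s0 = word Y.
  by apply/tgtX => i j hi hj; rewrite !s0_S // bump_lt.
have [X0 hX0] : exists X0 : 'S_n.+1, word X0 = src s0.
  apply: red_perm; first exact: take_uniq (@uniq_word _ s0).
  by rewrite size_takel // size_word.
have sr1 : src s1 = src s0.
  apply/srcE => i j hi hj.
  case: i hi => [|i] hi; case: j hj => [|j] hj.
  - by rewrite !ltnn.
  - have [m1 m2] := s0_mid j.+1 isT hj.
    by rewrite s1_0 s0_0 s1_mid //; have [-> _] := @adj_nat _ _ m1 m2.
  - have [m1 m2] := s0_mid i.+1 isT hi.
    by rewrite s1_0 s0_0 s1_mid //; have [_ ->] := @adj_nat _ _ m1 m2.
  - by rewrite !s1_mid.
have tg1 : tgt s1 = word Y.
  apply/tgtX => i j hi hj; rewrite -((@tgtX _ s0 Y).1 tg0 i j hi hj).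
  case: (ltnP i.+1 n.+1) => hi'; case: (ltnP j.+1 n.+1) => hj'.
  - by rewrite !s1_mid.
  - have -> : j = n by lia.
    have [m1 m2] := s0_mid i.+1 isT hi'.
    by rewrite (s1_mid i.+1) // s1_m s0_m; have [_ ->] := @adj_nat _ _ m1 m2.
  - have -> : i = n by lia.
    have [m1 m2] := s0_mid j.+1 isT hj'.
    by rewrite (s1_mid j.+1) // s1_m s0_m; have [-> _] := @adj_nat _ _ m1 m2.
  - have -> : i = n by lia.
    have -> : j = n by lia.
    by rewrite !ltnn.
have ne01 : s0 != s1.
  by apply/eqP => e; move: s1_0; rewrite -e s0_0; lia.
have hA : [set pi : 'S_n.+2 | (src pi == word X0) && (tgt pi == word Y)] = [set s0; s1].
  apply/setP => s; rewrite !inE; apply/idP/idP.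
    case/andP => /eqP hs /eqP ht.
    case e: (P s 0 < P s n.+1).
      by rewrite (@det _ X0 Y s s0) ?eqxx // ?s0_0 ?s0_m ?e ?ltnSn //.
    rewrite (@det _ X0 Y s s1) ?eqxx ?orbT //; first by rewrite sr1.
    by rewrite s1_0 s1_m e ltnNge leqnSn.
  by case/orP => /eqP ->; rewrite ?sr1 hX0 ?tg0 ?tg1 !eqxx.
exists X0; split.
  by rewrite /nedges hA cards2 ne01.
move=> X /eqP /cards2P [u [v [uv huv]]].
have : u \in [set pi : 'S_n.+2 | (src pi == word X) && (tgt pi == word Y)].
  by rewrite huv set21.
have : v \in [set pi : 'S_n.+2 | (src pi == word X) && (tgt pi == word Y)].
  by rewrite huv set22.
rewrite !inE => /andP [/eqP vX /eqP vY] /andP [/eqP uX /eqP uY].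
have hX0' : src s0 = word X0 by [].
have e0 : P s0 n.+1 = (P s0 0).+1 by rewrite s0_m s0_0.
case e: (P u 0 < P u n.+1).
  apply: (@uniq_part n X X0 Y s0 u v) => //.
  by apply/negP => ev; move: uv; rewrite (@det _ X Y u v) ?eqxx // e ev.
apply: (@uniq_part n X X0 Y s0 v u) => //; last by rewrite e.
case ev: (P v 0 < P v n.+1) => //.
by move: uv; rewrite (@det _ X Y u v) ?eqxx // e ev.
Qed.
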